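(* Let $(G,S)$ and $(H,S)$ be two compatible $d$-labeled boundaried graphs such that $\mathbf{Aux}(G,S)\oplus\mathbf{Aux}(H,S)$ has no cycles. If $F$ is an $S$-block of $(G,S)\oplus(H,S)$ and $uv$ is an edge of $F$, then $uv$ is contained in some $S$-block of $G$ or of $H$.
   Context: A block of a graph is a maximal connected subgraph without a cut vertex. A block $d$-labeling of a graph whose blocks have at most $d$ vertices is a map $V(G)\to[d]$ injective on each block; a $d$-labeled boundaried graph is a pair $(G,S)$ with $S\subseteq V(G)$ and $G$ carrying such a labeling. $(G,S)$ and $(H,S)$ are compatible if $V(G-S)\cap V(H-S)=\emptyset$, $G[S]=H[S]$, and labels agree on $S$. The sum $(G,S)\oplus(H,S)$ is the graph obtained from the disjoint union of $G$ and $H$ by identifying corresponding vertices of $S$ and removing duplicate edges inside $S$. For a boundaried graph $(G,S)$, an $S$-block is a block of $G$ containing an edge of $G[S]$ (for the sum, $S$-blocks are blocks of the sum containing an edge of $G[S]$). $\mathbf{Aux}(G,S)$ is the bipartite graph whose vertices are the connected components of $G$ and the connected components of $G[S]$, a component $C_1$ of $G$ adjacent to a component $C_2$ of $G[S]$ iff $C_2\subseteq C_1$; $\mathbf{Aux}(G,S)\oplus\mathbf{Aux}(H,S)$ is the disjoint union of $\mathbf{Aux}(G,S)$ and $\mathbf{Aux}(H,S)$ with the vertices corresponding to the same component of $G[S]=H[S]$ identified. *)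

(* Defs.v *)
From mathcomp Require Import all_boot.
Set Implicit Arguments. Unset Strict Implicit. Unset Printing Implicit Defensive.

(* Subgraphs relevant here (blocks,
   components) are induced subgraphs, represented by their vertex sets. *)

Section Graphs.
Variable T : finType.

Definition is_graph (V : {set T}) (e : rel T) : Prop :=
  [/\ symmetric e, irreflexive e & forall x y, e x y -> (x \in V) && (y \in V)].

Definition conn_in (e : rel T) (B : {set T}) (x y : T) : bool :=
  connect (fun a b => [&& e a b, a \in B & b \in B]) x y.

Definition connected_in (e : rel T) (B : {set T}) : Prop :=
  B != set0 /\ {in B &, forall x y, conn_in e B x y}.

(* v is a cut vertex of e[B]: removing it increases the number of
   components, i.e. it separates two vertices that were connected in e[B]. *)
Definition cut_vertex (e : rel T) (B : {set T}) (v : T) : Prop :=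
  v \in B /\ exists x y, [/\ x \in B :\ v, y \in B :\ v, conn_in e B x y
                           & ~~ conn_in e (B :\ v) x y].

Definition biconn (e : rel T) (B : {set T}) : Prop :=
  connected_in e B /\ forall v, ~ cut_vertex e B v.

Definition is_block (V : {set T}) (e : rel T) (B : {set T}) : Prop :=
  [/\ B \subset V, biconn e B &
      forall B' : {set T}, B \subset B' -> B' \subset V -> biconn e B' -> B' = B].

Definition is_Sblock (V : {set T}) (e : rel T) (S : {set T}) (B : {set T}) : Prop :=
  is_block V e B /\
  exists x y, [/\ x \in S, y \in S, e x y, x \in B & y \in B].

Definition block_labeling (d : nat) (V : {set T}) (e : rel T) (l : T -> 'I_d) : Prop :=
  forall B, is_block V e B -> #|B| <= d /\ {in B &, injective l}.

Definition is_comp (V : {set T}) (e : rel T) (C : {set T}) : Prop :=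
  exists2 x, x \in V & C = [set y in V | conn_in e V x y].

(* Aux(G,S) (+) Aux(H,S): vertices are tagged sets
   (0, C) with C a component of G, (1, C) with C a component of H,
   (2, C) with C a component of G[S] = H[S] (shared, i.e. identified);
   a component C1 of G (resp. H) is adjacent to a component C2 of G[S]
   iff C2 is contained in C1. *)
Definition aux_node (VG : {set T}) (eG : rel T) (VH : {set T}) (eH : rel T)
    (S : {set T}) (a : nat * {set T}) : Prop :=
  (a.1 = 0 /\ is_comp VG eG a.2) \/ (a.1 = 1 /\ is_comp VH eH a.2)
  \/ (a.1 = 2 /\ is_comp S eG a.2).

Definition aux_adj0 (a b : nat * {set T}) : bool :=
  ((a.1 == 0) || (a.1 == 1)) && (b.1 == 2) && (b.2 \subset a.2).

Definition aux_adj VG eG VH eH S (a b : nat * {set T}) : Prop :=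
  aux_node VG eG VH eH S a /\ aux_node VG eG VH eH S b /\
  (aux_adj0 a b \/ aux_adj0 b a).

Definition aux_sum_acyclic VG eG VH eH S : Prop :=
  ~ exists c : seq (nat * {set T}),
      [/\ 3 <= size c, uniq c &
          forall i, i < size c ->
            aux_adj VG eG VH eH S (nth (0, set0) c i)
                                  (nth (0, set0) c (i.+1 %% size c))].

End Graphs.

(* Main.v *)
Require Import Defs.
From mathcomp Require Import all_boot.
From Stdlib Require Import Classical.
From mathcomp Require Import zify.
Set Implicit Arguments. Unset Strict Implicit. Unset Printing Implicit Defensive.

Section Gen.
Variable T : finType.
Implicit Types (e : rel T) (B W X Y V : {set T}).

Lemma conn_in_sub e e' B B' x y : B \subset B' -> subrel e e' ->
  conn_in e B x y -> conn_in e' B' x y.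
Proof.
move=> sB se; apply: connect_sub => a b /and3P[eab aB bB]; apply: connect1.
by rewrite /= (se _ _ eab) (subsetP sB _ aB) (subsetP sB _ bB).
Qed.

Lemma conn_in_subS e B B' x y : B \subset B' -> conn_in e B x y -> conn_in e B' x y.
Proof. by move=> sB; apply: conn_in_sub. Qed.

Lemma conn_in_sym e B : symmetric e -> symmetric (conn_in e B).
Proof.
move=> se x y; apply: (sym_connect_sym (e := fun a b => [&& e a b, a \in B & b \in B])) => a b /=.
by rewrite se; case: (a \in B); case: (b \in B); rewrite /= ?andbT ?andbF.
Qed.

Lemma conn_in_trans e B : transitive (conn_in e B).
Proof. by move=> y x z; apply: connect_trans. Qed.

Lemma conn_in_edge e B x y : e x y -> x \in B -> y \in B -> conn_in e B x y.
Proof. by move=> exy xB yB; apply: connect1; rewrite /= exy xB yB. Qed.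

Lemma conn_in0 e B x : conn_in e B x x.
Proof. exact: connect0. Qed.

Definition bic e B := [/\ B != set0, {in B &, forall x y, conn_in e B x y} &
  forall w, {in B :\ w &, forall x y, conn_in e (B :\ w) x y}].

Lemma setD1_notin B w : w \notin B -> B :\ w = B.
Proof. by move=> wB; apply/setP=> z; rewrite !inE; case: eqP => // ->; rewrite (negbTE wB). Qed.

Lemma bicP e B : biconn e B <-> bic e B.
Proof.
split.
  move=> [[ne con] nocut]; split => // w x y xB yB.
  case: (boolP (w \in B)) => wB; last by rewrite setD1_notin //; apply: con; rewrite -(setD1_notin wB).
  case H: (conn_in e (B :\ w) x y) => //; exfalso; apply: (nocut w); split => //.
  exists x, y; split => //; last by rewrite H.
  by apply: con; move: xB yB; rewrite !inE => /andP[] ? ? /andP[] ? ?.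
move=> [ne con rem]; split; first by [].
move=> w [wB [x [y [xB yB _ /negP]]]]; apply; exact: rem.
Qed.

Lemma conn_anchor e W c : symmetric e -> c \in W ->
  (forall z, z \in W -> conn_in e W z c) -> {in W &, forall x y, conn_in e W x y}.
Proof.
move=> se cW h x y xW yW; apply: (conn_in_trans (h x xW)).
by rewrite conn_in_sym //; apply: h.
Qed.

Lemma bicU e B1 B2 a b : symmetric e -> bic e B1 -> bic e B2 -> a != b ->
  a \in B1 -> a \in B2 -> b \in B1 -> b \in B2 -> bic e (B1 :|: B2).
Proof.
move=> se [n1 c1 r1] [n2 c2 r2] ab a1 a2 b1 b2; split.
- by apply/set0Pn; exists a; rewrite inE a1.
- apply: (conn_anchor (c:=a)) => //; first by rewrite inE a1.
  move=> z; rewrite inE => /orP[] zB.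
    by apply: (conn_in_subS (subsetUl _ _)); apply: c1.
  by apply: (conn_in_subS (subsetUr _ _)); apply: c2.
- move=> w; rewrite setDUl.
  have [c [c1' c2']] : exists c, c \in B1 :\ w /\ c \in B2 :\ w.
    case: (a =P w) => [aw|/eqP naw]; [exists b | exists a]; rewrite !inE ?naw ?a1 ?a2 ?b1 ?b2 //.
    by rewrite -aw eq_sym ab.
  apply: (conn_anchor (c:=c)) => //; first by rewrite inE c1'.
  move=> z; rewrite inE => /orP[] zB.
    by apply: (conn_in_subS (subsetUl _ _)); apply: r1.
  by apply: (conn_in_subS (subsetUr _ _)); apply: r2.
Qed.

Lemma bic_sub e e' B : subrel e e' -> bic e B -> bic e' B.
Proof.
move=> se [n c r]; split => //.
  by move=> x y xB yB; apply: (conn_in_sub (subxx _) se); apply: c.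
by move=> w x y xB yB; apply: (conn_in_sub (subxx _) se); apply: r.
Qed.

Lemma bic_edge e x y : symmetric e -> e x y -> bic e [set x; y].
Proof.
move=> se exy.
have H : forall W, x \in W -> y \in W -> W \subset [set x; y] ->
   {in W &, forall a b, conn_in e W a b}.
  move=> W xW yW sW a b /(subsetP sW) + /(subsetP sW); rewrite !inE.
  move=> /orP[]/eqP-> /orP[]/eqP->; rewrite ?conn_in0 //; first exact: conn_in_edge.
  by apply: conn_in_edge; rewrite // se.
split.
- by apply/set0Pn; exists x; rewrite !inE eqxx.
- by apply: H; rewrite ?subxx // !inE eqxx ?orbT.
- move=> w a b aW bW; case: (a =P b) => [->|/eqP nab]; first exact: conn_in0.
  have [xw yw] : x \in [set x; y] :\ w /\ y \in [set x; y] :\ w.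
    move: aW bW nab; rewrite !inE => /andP[aw ax] /andP[bw bx] nab.
    case/orP: ax => /eqP ea; case/orP: bx => /eqP eb; move: aw bw nab; rewrite ea eb ?eqxx //.
      by move=> -> ->; rewrite ?eqxx ?orbT.
    by move=> -> ->; rewrite ?eqxx ?orbT.
  by apply: H => //; apply: subD1set.
Qed.

Lemma block_exists V e X : bic e X -> X \subset V -> exists B, is_block V e B /\ X \subset B.
Proof.
move=> bX sXV.
suff: forall n B, #|V| - #|B| <= n -> X \subset B -> B \subset V -> biconn e B ->
   exists B, is_block V e B /\ X \subset B.
  by move/(_ _ X (leqnn _)); apply => //; apply/bicP.
elim=> [|n IH] B hn sXB sBV bB.
  exists B; split => //; split => // B' sBB' sB'V bB'.
  apply/eqP; rewrite eq_sym eqEcard sBB' /=.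
  by have := subset_leq_card sB'V; move: hn; lia.
case: (classic (forall B', B \subset B' -> B' \subset V -> biconn e B' -> B' = B)) => hmax.
  by exists B; split => //; split.
apply: NNPP => hne; apply: hmax => B' sBB' sB'V bB'; apply: NNPP => h4; apply: hne.
apply: (IH B') => //; last exact: subset_trans sBB'.
have lt : #|B| < #|B'| by rewrite proper_card // properEneq sBB' andbT; apply/eqP => E; apply: h4; rewrite E.
have := subset_leq_card sB'V.
move: hn; lia.
Qed.

Lemma path_all (r : rel T) (P : pred T) x s :
  (forall a c, r a c -> P c) -> path r x s -> all P s.
Proof.
move=> h; elim: s x => //= y s IH x /andP[rxy ps].
by rewrite (h _ _ rxy) (IH _ ps).
Qed.

Lemma sub_cons_set (x : T) s : [set z in s] \subset [set z in x :: s].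
Proof. by apply/subsetP=> z; rewrite !inE => ->; rewrite orbT. Qed.

Lemma path_conn_last e x s : path e x s ->
  forall t, t \in x :: s -> conn_in e [set z in x :: s] t (last x s).
Proof.
elim: s x => [|y s IH] x /=.
  by move=> _ t; rewrite inE => /eqP->; apply: conn_in0.
move=> /andP[exy ps] t; rewrite inE => /orP[/eqP->|ts].
  apply: (@conn_in_trans _ _ y).
    by apply: conn_in_edge; rewrite // !inE eqxx ?orbT.
  apply: (conn_in_subS (sub_cons_set x _)); apply: IH; rewrite // inE eqxx //.
by apply: (conn_in_subS (sub_cons_set x _)); apply: IH.
Qed.

Lemma path_rem e b s : symmetric e -> path e b s -> uniq (b :: s) ->
  forall w t, t \in [set z in b :: s] :\ w ->
  (last b s != w /\ conn_in e ([set z in b :: s] :\ w) t (last b s)) \/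
  (b != w /\ conn_in e ([set z in b :: s] :\ w) t b).
Proof.
move=> se; elim: s b => [|z s IH] b.
  move=> _ _ w t; rewrite !inE => /andP[tw /eqP tb]; right; rewrite -tb tw.
  by split => //; apply: conn_in0.
move=> /= /andP[ebz ps] /andP[bnin uq] w t.
rewrite in_setD1 => /andP[tw]; rewrite inE => /orP[/eqP tb | tin].
  by right; rewrite -tb tw; split => //; apply: conn_in0.
have sub : [set x in z :: s] :\ w \subset [set x in b :: z :: s] :\ w.
  by apply: setSD; apply: sub_cons_set.
have tin' : t \in [set x in z :: s] :\ w by rewrite !inE tw.
case: (IH z ps uq w t tin') => [[lw c]|[zw c]].
  by left; split => //; apply: conn_in_subS c.
case: (b =P w) => [bw|/eqP bw].
  left.
  have lzs : last z s \in z :: s by apply: mem_last.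
  have lw : last z s != w by apply/eqP => E; move: bnin; rewrite bw -E lzs.
  split => //; apply: (@conn_in_subS e [set x in z :: s]); last exact: (path_conn_last ps tin).
  apply/subsetP => a; rewrite inE => ha; rewrite !inE.
  move: ha; rewrite inE => /orP[] ha; rewrite ha ?orbT ?andbT; last first.
  1,2: by apply/eqP => E; move: bnin; rewrite bw -E inE ?ha ?orbT.
right; split => //; apply: (@conn_in_trans _ _ z); first exact: conn_in_subS c.
apply: conn_in_edge; first by rewrite se.
  by rewrite !inE eqxx zw orbT.
by rewrite !inE eqxx bw.
Qed.

Lemma ear_path V e B b y P : is_graph V e -> is_block V e B -> b \in B -> y \in B ->
  b != y -> P != [::] -> uniq P -> {subset P <= V} -> {in P, forall z, z \notin B} ->
  path e b (rcons P y) -> False.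
Proof.
move=> [se ie eV] [sBV bB mB] bB' yB nby Pn uP PV PB pth.
have [ne cB rB] := (bicP e B).1 bB.
set Pi := [set z in b :: rcons P y].
have bnP : b \notin P by apply/negP => /PB; rewrite bB'.
have ynP : y \notin P by apply/negP => /PB; rewrite yB.
have uq : uniq (b :: rcons P y).
  by rewrite /= rcons_uniq mem_rcons inE negb_or nby bnP ynP uP.
have lastE : last b (rcons P y) = y by rewrite last_rcons.
have bPi : b \in Pi by rewrite inE mem_head.
have yPi : y \in Pi by rewrite inE inE mem_rcons mem_head orbT.
have bic' : bic e (B :|: Pi).
  split.
  - by apply/set0Pn; exists b; rewrite inE bB'.
  - apply: (conn_anchor (c:=b)) => //; first by rewrite inE bB'.
    move=> z; rewrite inE => /orP[] zB.
      by apply: (conn_in_subS (subsetUl _ _)); apply: cB.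
    apply: (@conn_in_trans _ _ y).
      apply: (conn_in_subS (subsetUr _ _)); rewrite -lastE; apply: path_conn_last => //.
      by rewrite inE in zB.
    by apply: (conn_in_subS (subsetUl _ _)); apply: cB.
  - move=> w; rewrite setDUl.
    have sub1 : B :\ w \subset (B :\ w) :|: (Pi :\ w) by apply: subsetUl.
    have sub2 : Pi :\ w \subset (B :\ w) :|: (Pi :\ w) by apply: subsetUr.
    case: (boolP (w \in B)) => wB.
      have [c [cB' cby]] : exists c, c \in B :\ w /\ (forall z, z \in B :\ w -> conn_in e (B :\ w) z c).
        have [c cB'] : exists c, c \in B :\ w.
          case: (b =P w) => [bw|/eqP bw]; [exists y | exists b]; rewrite in_setD1 ?yB ?bB' andbT //.
          by rewrite -bw eq_sym.
        by exists c; split => // z zB'; apply: rB.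
      apply: (conn_anchor (c:=c)) => //; first by rewrite inE cB'.
      move=> z; rewrite inE => /orP[] zB.
        by apply: (conn_in_subS sub1); apply: cby.
      case: (path_rem se pth uq zB) => -[nw c']; rewrite ?lastE in nw c'.
        apply: (@conn_in_trans _ _ y); first exact: conn_in_subS c'.
        by apply: (conn_in_subS sub1); apply: cby; rewrite in_setD1 nw yB.
      apply: (@conn_in_trans _ _ b); first exact: conn_in_subS c'.
      by apply: (conn_in_subS sub1); apply: cby; rewrite in_setD1 nw bB'.
    have BW : B :\ w = B by rewrite setD1_notin.
    have bw : b != w by apply/eqP => E; move: wB; rewrite -E bB'.
    apply: (conn_anchor (c:=b)) => //; first by rewrite !inE bw bB'.
    move=> z; rewrite inE => /orP[] zB.
      by apply: (conn_in_subS sub1); rewrite BW; apply: cB; rewrite // -BW.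
    case: (path_rem se pth uq zB) => -[nw c']; rewrite ?lastE in nw c'.
      apply: (@conn_in_trans _ _ y); first exact: conn_in_subS c'.
      by apply: (conn_in_subS sub1); rewrite BW; apply: cB.
    by apply: (conn_in_subS sub2).
have sV : B :|: Pi \subset V.
  rewrite subUset sBV /=; apply/subsetP => z; rewrite !inE mem_rcons !inE.
  by case/or3P => [/eqP->|/eqP->|/PV //]; apply: (subsetP sBV).
have := mB _ (subsetUl _ _) sV ((bicP _ _).2 bic').
move=> E.
have [z zP] : exists z, z \in P by case: P Pn {PV PB pth uP bnP ynP uq lastE Pi bPi yPi bic' sV E} => // z P _; exists z; rewrite mem_head.
have : z \in B :|: Pi by rewrite inE /Pi inE inE mem_rcons inE zP !orbT.
by rewrite E => zB; move: (PB z zP); rewrite zB.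
Qed.


Lemma ear_walk V e B b y z1 x : is_graph V e -> is_block V e B -> b \in B -> y \in B ->
  b != y -> e b z1 -> z1 \notin B ->
  connect (fun a c => [&& e a c, a \notin B & c \notin B]) z1 x -> e x y -> False.
Proof.
move=> gV blk bB yB nby ebz z1B /connectP[s ps ->] exy.
have [se ie eV] := gV.
have ps' : path e z1 (rcons s y).
  by rewrite rcons_path exy andbT; apply: sub_path ps => a c /and3P[].
have sB : all (fun t => t \notin B) s by apply: (path_all _ ps) => a c /and3P[].
have : exists p', [/\ path e z1 p', uniq (z1 :: p'), {subset p' <= rcons s y}
   & last z1 p' = last z1 (rcons s y)].
  by case: (shortenP ps') => p' ? ? ?; exists p'; split.
rewrite last_rcons => -[p' [pp' up' sub' lp']].
case/lastP: p' pp' up' sub' lp' => [|P y'] pp' up' sub' lp'.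
  by move: z1B; rewrite /= in lp'; rewrite lp' yB.
rewrite last_rcons in lp'; subst y'.
have uP : uniq (z1 :: P) by move: up'; rewrite -rcons_cons rcons_uniq => /andP[].
have ynP : y \notin z1 :: P by move: up'; rewrite -rcons_cons rcons_uniq => /andP[].
apply: (ear_path gV blk bB yB nby (P := z1 :: P)) => //.
- move=> t; rewrite inE => /orP[/eqP->|tP].
    by have /andP[] := eV _ _ ebz.
  have hall : all (fun t => t \in V) (rcons P y) by apply: (path_all _ pp') => a c /eV /andP[].
  by apply: (allP hall); rewrite mem_rcons inE tP orbT.
- move=> t; rewrite inE => /orP[/eqP->//|tP].
  have : t \in rcons s y by apply: sub'; rewrite mem_rcons inE tP orbT.
  rewrite mem_rcons inE => /orP[/eqP ty|ts]; last by apply: (allP sB).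
  by move: ynP; rewrite -ty inE tP orbT.
- by rewrite rcons_cons /= ebz.
Qed.

Lemma cvl_aux V e B (R : rel T) : is_graph V e -> is_block V e B -> subrel R e ->
  forall s x, path R x s -> last x s \in B ->
  (x \in B -> last x s != x -> exists y y', [/\ y \in B, y' \in B, y != y' & R y y']) /\
  (forall b z1, b \in B -> e b z1 -> z1 \notin B ->
     connect (fun a c => [&& e a c, a \notin B & c \notin B]) z1 x -> last x s != b ->
     exists y y', [/\ y \in B, y' \in B, y != y' & R y y']).
Proof.
move=> gV blk sR; have [se ie eV] := gV.
have outB : forall z1 x, z1 \notin B ->
   connect (fun a c => [&& e a c, a \notin B & c \notin B]) z1 x -> x \notin B.
  move=> z1 x z1B /connectP[s ps ->].
  have := mem_last z1 s; rewrite inE => /orP[/eqP->//|].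
  have hall : all (fun t => t \notin B) s by apply: (path_all _ ps) => a c /and3P[].
  by move/(allP hall).
elim=> [|y s IH] x /=.
  move=> _ xB; split; first by rewrite eqxx.
  by move=> b z1 _ _ z1B /(outB _ _ z1B); rewrite xB.
move=> /andP[Rxy ps] lB; have [IH1 IH2] := IH y ps lB.
split.
  move=> xB lx; case: (boolP (y \in B)) => yB.
    exists x, y; split => //; apply/eqP => E; move: (sR _ _ Rxy); rewrite E.
    by rewrite ie.
  by apply: (IH2 x y xB (sR _ _ Rxy) yB (connect0 _ _)).
move=> b z1 bB ebz z1B cz lb.
have xB := outB _ _ z1B cz.
case: (boolP (y \in B)) => yB.
  case: (b =P y) => [E|/eqP nby].
    by apply: IH1 => //; move: lb; rewrite E.
  by exfalso; apply: (ear_walk gV blk bB yB nby ebz z1B cz); apply: sR.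
apply: (IH2 b z1) => //; apply: (connect_trans cz); apply: connect1.
by rewrite /= sR // xB yB.
Qed.

Lemma cvl V e B (R : rel T) p q : is_graph V e -> is_block V e B -> subrel R e ->
  p \in B -> q \in B -> p != q -> connect R p q ->
  exists y y', [/\ y \in B, y' \in B, y != y' & R y y'].
Proof.
move=> gV blk sR pB qB npq /connectP[s ps qE].
have lB : last p s \in B by rewrite -qE.
have [H1 _] := cvl_aux gV blk sR ps lB.
by apply: H1 => //; rewrite -qE eq_sym.
Qed.

End Gen.

Lemma first_hit (T : finType) (r : rel T) (B : {set T}) z y : z \notin B -> connect r z y -> y \in B ->
  exists p, [/\ p \in B, connect (fun a c => r a c && ~~((a \in B) && (c \in B))) z p
    & exists a, r a p].
Proof.
move=> zB /connectP[s ps ->]; elim: s z zB ps => [|t s IH] z zB /=.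
  by move=> _ zB'; rewrite zB' in zB.
move=> /andP[rzt ps] lB; case: (boolP (t \in B)) => tB.
  by exists t; split => //; [apply: connect1; rewrite rzt /= (negbTE zB) | exists z].
have [p [pB cp ha]] := IH t tB ps lB; exists p; split => //.
by apply: connect_trans cp; apply: connect1; rewrite rzt /= (negbTE zB).
Qed.

Lemma connect_map (T1 T2 : finType) (e1 : rel T1) (e2 : rel T2) (f : T1 -> T2) x y :
  (forall a c, e1 a c -> connect e2 (f a) (f c)) -> connect e1 x y -> connect e2 (f x) (f y).
Proof.
move=> h /connectP[s ps ->]; elim: s x ps => [|z s IH] x /=; first by move=> _; apply: connect0.
by case/andP => exz ps; apply: connect_trans (h _ _ exz) (IH _ ps).
Qed.

Section Core.
Variables (T : finType) (VG VH S : {set T}) (eG eH : rel T) (VM : {set T}) (eM : rel T).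
Hypotheses (hG : is_graph VG eG) (hH : is_graph VH eH) (hSG : S \subset VG) (hSH : S \subset VH)
  (hdisj : [disjoint VG :\: S & VH :\: S]) (hGS : {in S &, forall x y, eG x y = eH x y})
  (hacyc : aux_sum_acyclic VG eG VH eH S) (hVM : VM = VG :|: VH)
  (heM : forall x y, eM x y = eG x y || eH x y).

Lemma inter x : x \in VG -> x \in VH -> x \in S.
Proof.
move=> xG xH; apply/negPn/negP => xS.
have := disjointFr hdisj (x:=x); rewrite !inE xS xG xH => /(_ isT); done.
Qed.

Lemma eM_sym : symmetric eM.
Proof. by move=> x y; rewrite !heM; have [sG _ _] := hG; have [sH _ _] := hH; rewrite sG sH. Qed.

Lemma eM_V x y : eM x y -> (x \in VM) && (y \in VM).
Proof.
rewrite heM hVM !inE; have [_ _ eG'] := hG; have [_ _ eH'] := hH.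
by case/orP => [/eG'|/eH'] /andP[-> ->]; rewrite ?orbT.
Qed.

Lemma eMG x y : eM x y -> x \in VG -> y \in VG -> eG x y.
Proof.
rewrite heM => /orP[//|exy] xG yG; have [_ _ eH'] := hH.
have /andP[xH yH] := eH' _ _ exy.
by rewrite hGS // inter.
Qed.

Lemma eM_cases x y : eM x y ->
  (eG x y /\ (x \in VG) /\ (y \in VG)) \/ (eH x y /\ (x \in VH) /\ (y \in VH)).
Proof.
rewrite heM; have [_ _ eG'] := hG; have [_ _ eH'] := hH.
by case/orP => h; [left; have /andP[] := eG' _ _ h | right; have /andP[] := eH' _ _ h].
Qed.

Definition Gc z := [set y in VG | conn_in eG VG z y].
Definition Hc z := [set y in VH | conn_in eH VH z y].
Definition Sc z := [set y in S | conn_in eG S z y].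

Lemma eqS_conn x y : conn_in eG S x y = conn_in eH S x y.
Proof.
apply: eq_connect => a b /=; case: (boolP (a \in S)) => aS; case: (boolP (b \in S)) => bS;
  rewrite ?andbF ?andbT ?hGS //.
Qed.

Lemma comp_eq (V : {set T}) (e : rel T) a b : symmetric e -> conn_in e V a b ->
  [set y in V | conn_in e V a y] = [set y in V | conn_in e V b y].
Proof.
move=> se ab; apply/setP => y; rewrite !inE; case: (y \in V) => //=.
apply/idP/idP => h; first by apply: conn_in_trans h; rewrite conn_in_sym.
exact: conn_in_trans h.
Qed.

Lemma Sc_sub_Gc a b : a \in S -> conn_in eG VG b a -> Sc a \subset Gc b.
Proof.
move=> aS ba; apply/subsetP => y; rewrite !inE => /andP[yS ay].
rewrite (subsetP hSG _ yS); apply: conn_in_trans ba _.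
exact: conn_in_subS hSG ay.
Qed.

Lemma Sc_sub_Hc a b : a \in S -> conn_in eH VH b a -> Sc a \subset Hc b.
Proof.
move=> aS ba; apply/subsetP => y; rewrite !inE => /andP[yS ay].
rewrite (subsetP hSH _ yS); apply: conn_in_trans ba _.
by apply: (conn_in_subS hSH); rewrite -eqS_conn.
Qed.

Definition node z : option bool * {set T} :=
  if z \in S then (None, Sc z) else if z \in VG then (Some false, Gc z) else (Some true, Hc z).

Definition tagf (n : option bool * {set T}) : nat * {set T} :=
  (match n.1 with None => 2 | Some b => nat_of_bool b end, n.2).

Lemma tagf_inj : injective tagf.
Proof. by move=> [[[]|] C] [[[]|] D] [] //= ->. Qed.

Definition adjN a b := aux_adj0 (tagf a) (tagf b) || aux_adj0 (tagf b) (tagf a).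

Lemma adjN_sym : symmetric adjN.
Proof. by move=> a b; rewrite /adjN orbC. Qed.

Lemma node_ok z : z \in VM -> aux_node VG eG VH eH S (tagf (node z)).
Proof.
rewrite hVM inE => zV; rewrite /node /aux_node.
case: ifP => zS; first by right; right; split => //; exists z.
case: ifP => zG; first by left; split => //; exists z.
by right; left; split => //; exists z; move: zV; rewrite zG.
Qed.

Lemma step a b : eM a b -> node a = node b \/ adjN (node a) (node b).
Proof.
move=> eab; have [sG _ eG'] := hG; have [sH _ eH'] := hH.
have key : forall a b, eM a b -> a \in S -> b \notin S ->
    node a = node b \/ adjN (node a) (node b).
  clear a b eab; move=> a b eab aS bS; right; rewrite /node aS (negbTE bS) /adjN /aux_adj0 /=.
  case: (eM_cases eab) => [[e [aG bG]]|[e [aH bH]]].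
    rewrite bG /= ?orbT; apply: Sc_sub_Gc => //.
    by apply: conn_in_edge; rewrite // sG.
  case: ifP => bG; first by move: bS; rewrite inter.
  rewrite /= ?orbT; apply: Sc_sub_Hc => //.
  by apply: conn_in_edge; rewrite // sH.
case: (boolP (a \in S)) => aS; case: (boolP (b \in S)) => bS.
- left; rewrite /node aS bS; congr (_, _); apply: comp_eq => //.
  apply: conn_in_edge => //; case: (eM_cases eab) => [[]|[e _]] //.
  by rewrite hGS.
- exact: key.
- case: (key b a) => //; first by rewrite eM_sym.
    by move=> ->; left.
  by rewrite adjN_sym; right.
- left; rewrite /node (negbTE aS) (negbTE bS).
  case: (eM_cases eab) => [[e [aG bG]]|[e [aH bH]]].
    by rewrite aG bG; congr (_, _); apply: comp_eq => //; apply: conn_in_edge.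
  have aG : a \in VG = false by apply/negP => aG; move: aS; rewrite inter.
  have bG : b \in VG = false by apply/negP => bG; move: bS; rewrite inter.
  by rewrite aG bG; congr (_, _); apply: comp_eq => //; apply: conn_in_edge.
Qed.


Variables (u : T).
Hypothesis (uG : u \in VG).

Definition A := Gc u.
Definition nA : option bool * {set T} := (Some false, A).
Definition isnode n := [exists z in VM, node z == n].
Definition rr a b := [&& adjN a b, a != nA, b != nA, isnode a & isnode b].
Definition okn n := (n == nA) || isnode n.
Definition cadj a b := [&& adjN a b, okn a & okn b].

Lemma okn_aux n : okn n -> aux_node VG eG VH eH S (tagf n).
Proof.
case/orP => [/eqP->|/existsP[z /andP[zV /eqP <-]]]; last exact: node_ok.
by left; split => //; exists u.
Qed.

Lemma cadj_aux a b : cadj a b -> aux_adj VG eG VH eH S (tagf a) (tagf b).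
Proof.
case/and3P => ad oa ob; split; first exact: okn_aux.
by split; [exact: okn_aux | apply/orP].
Qed.

Lemma no_cycle n1 n2 : connect rr n1 n2 -> n1 != n2 -> adjN nA n1 -> adjN n2 nA ->
  isnode n1 -> isnode n2 -> n1 != nA -> False.
Proof.
move=> /connectP[s ps E] n12 a1 a2 i1 i2 n1A.
have : exists p', [/\ path rr n1 p', uniq (n1 :: p') & last n1 p' = last n1 s].
  by case: (shortenP ps) => p' ? ? ?; exists p'; split.
rewrite -E => -[p' [pp' up' lp']].
have p'n : p' != [::] by case: p' pp' up' lp' => //= _ _ E'; rewrite E' eqxx in n12.
have allA : all (fun n => n != nA) p' by apply: (path_all _ pp') => a b /and5P[].
have uc : uniq (nA :: n1 :: p').
  rewrite cons_uniq up' andbT inE negb_or eq_sym n1A /=.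
  by apply/negP => /(allP allA); rewrite eqxx.
have cyc : path cadj nA (rcons (n1 :: p') nA).
  have c1 : cadj nA n1 by rewrite /cadj a1 /okn eqxx i1 orbT.
  have c2 : path cadj n1 p'.
    by apply: sub_path pp' => a b /and5P[? ? ? ? ?]; rewrite /cadj /okn; apply/and3P; split => //; apply/orP; right.
  have c3 : cadj n2 nA by rewrite /cadj a2 /okn eqxx i2 orbT.
  rewrite rcons_path; apply/andP; split; first by rewrite /= c1 c2.
  by rewrite -lp' in c3.
apply: hacyc; exists (map tagf (nA :: n1 :: p')); split.
- by rewrite size_map /= ltnS; case: (p') p'n.
- by rewrite map_inj_uniq //; apply: tagf_inj.
move=> i; rewrite size_map => hi.
have := (pathP nA cyc) i; rewrite size_rcons => /(_ hi).
rewrite (nth_map nA) // (nth_map nA); last by rewrite ltn_pmod.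
have e1 : nth nA (nA :: rcons (n1 :: p') nA) i = nth nA (nA :: n1 :: p') i.
  by rewrite -rcons_cons nth_rcons hi.
have e2 : nth nA (rcons (n1 :: p') nA) i = nth nA (nA :: n1 :: p') (i.+1 %% size (nA :: n1 :: p')).
  rewrite nth_rcons; case: (ltnP i (size (n1 :: p'))) => hiL.
    by rewrite modn_small //= ltnS.
  have E' : i = size (n1 :: p') by apply/eqP; rewrite eqn_leq hiL andbT -ltnS.
  by rewrite E' eqxx modnn.
by rewrite e1 e2; apply: cadj_aux.
Qed.


Lemma A_sub : A \subset VG.
Proof. by apply/subsetP => a; rewrite inE => /andP[]. Qed.

Lemma A_closed a b : a \in A -> eG a b -> b \in A.
Proof.
rewrite !inE => /andP[aG ua] eab; have [_ _ eV] := hG.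
have /andP[_ bG] := eV _ _ eab; rewrite bG /=.
by apply: conn_in_trans ua _; apply: conn_in_edge.
Qed.

Lemma exitS a b : a \in A -> eM a b -> b \notin A -> a \in S.
Proof.
move=> aA eab bA; case: (eM_cases eab) => [[e _]|[e [aH _]]].
  by move: bA; rewrite (A_closed aA e).
by apply: inter => //; apply: (subsetP A_sub).
Qed.

Lemma VG_VM a : a \in VG -> a \in VM.
Proof. by rewrite hVM inE => ->. Qed.

Lemma node_ne a : a \notin A -> a \in VM -> node a != nA.
Proof.
move=> aA aV; rewrite /node; case: ifP => // aS; case: ifP => // aG.
apply/eqP => -[E]; move: aA; rewrite -E inE aG /=; apply/negP/negPn.
exact: conn_in0.
Qed.

Lemma nodeS_ne a : a \in S -> node a != nA.
Proof. by rewrite /node => ->. Qed.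

Lemma isnode_node a : a \in VM -> isnode (node a).
Proof. by move=> aV; apply/existsP; exists a; rewrite aV eqxx. Qed.

Lemma conn_out (B : {set T}) z1 x : z1 \notin B ->
  connect (fun a c => [&& eM a c, a \notin B & c \notin B]) z1 x -> x \notin B.
Proof.
move=> z1B /connectP[s ps ->].
have := mem_last z1 s; rewrite inE => /orP[/eqP->//|].
have hall : all (fun t => t \notin B) s by apply: (path_all _ ps) => a c /and3P[].
by move/(allP hall).
Qed.

Lemma adjN_A a : a \in A -> a \in S -> adjN nA (node a).
Proof.
move=> aA aS; rewrite /adjN /node aS /aux_adj0 /= orbF; apply: Sc_sub_Gc => //.
by move: aA; rewrite inE => /andP[].
Qed.

Lemma exl s0 z1 x w : s0 \in A -> eM s0 z1 -> z1 \notin A ->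
  connect (fun a c => [&& eM a c, a \notin A & c \notin A]) z1 x -> eM x w -> w \in A ->
  conn_in eG S s0 w.
Proof.
move=> s0A es0 z1A cz exw wA.
have xA := conn_out z1A cz.
have s0S := exitS s0A es0 z1A.
have wS : w \in S by apply: (exitS wA _ xA); rewrite eM_sym.
apply/negPn/negP => ncon.
set Mx := fun a c => [&& eM a c, node a != nA & node c != nA].
have z1V : z1 \in VM by have /andP[] := eM_V es0.
have xV : x \in VM by have /andP[] := eM_V exw.
have cM : connect Mx s0 w.
  apply: (@connect_trans _ _ z1); first by apply: connect1; rewrite /Mx es0 (nodeS_ne s0S) (node_ne z1A z1V).
  apply: (@connect_trans _ _ x); last by apply: connect1; rewrite /Mx exw (nodeS_ne wS) (node_ne xA xV).
  apply: connect_sub cz => a c /and3P[eac aA cA]; apply: connect1.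
  by have /andP[aV cV] := eM_V eac; rewrite /Mx eac (node_ne aA aV) (node_ne cA cV).
have cR : connect rr (node s0) (node w).
  apply: (connect_map _ cM) => a c /and3P[eac an cn].
  have /andP[aV cV] := eM_V eac.
  case: (step eac) => [->|ad]; first exact: connect0.
  by apply: connect1; rewrite /rr ad an cn !isnode_node.
have s0V : s0 \in VM by apply: VG_VM; apply: (subsetP hSG).
have wV : w \in VM by apply: VG_VM; apply: (subsetP hSG).
apply: (no_cycle cR) => //.
- rewrite /node s0S wS; apply/eqP => -[E]; move/negP: ncon; apply.
  have : w \in Sc w by rewrite inE wS conn_in0.
  by rewrite -E inE => /andP[].
- exact: adjN_A.
- by rewrite adjN_sym; apply: adjN_A.
- exact: isnode_node.
- exact: isnode_node.
- exact: nodeS_ne.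
Qed.

Lemma rl (B0 : {set T}) :
  let M' := fun x y => eM x y && ~~((x \in B0) && (y \in B0)) in
  let R' := fun x y => eG x y && (((x \in S) && (y \in S)) || ~~((x \in B0) && (y \in B0))) in
  forall s x, path M' x s -> last x s \in A ->
  (x \in A -> connect R' x (last x s)) /\
  (forall s0 z1, s0 \in A -> eM s0 z1 -> z1 \notin A ->
     connect (fun a c => [&& eM a c, a \notin A & c \notin A]) z1 x -> connect R' s0 (last x s)).
Proof.
move=> M' R'; elim=> [|y s IH] x /=.
  move=> _ xA; split => [_|s0 z1 _ _ z1A cz]; first exact: connect0.
  by move: (conn_out z1A cz); rewrite xA.
move=> /andP[/andP[exy nB] ps] lA; have [IH1 IH2] := IH y ps lA.
split.
  move=> xA; case: (boolP (y \in A)) => yA.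
    apply: (@connect_trans _ _ y); last exact: IH1.
    apply: connect1; rewrite /R' nB orbT andbT; apply: eMG => //; exact: (subsetP A_sub).
  by apply: (IH2 x y) => //; apply: connect0.
move=> s0 z1 s0A es0 z1A cz.
have xA := conn_out z1A cz.
case: (boolP (y \in A)) => yA.
  apply: (@connect_trans _ _ y); last exact: IH1.
  have := exl s0A es0 z1A cz exy yA.
  apply: connect_sub => a c /and3P[eac aS cS]; apply: connect1.
  by rewrite /R' eac aS cS.
apply: (IH2 s0 z1) => //; apply: (connect_trans cz); apply: connect1.
by rewrite exy xA yA.
Qed.


Lemma core F v : is_Sblock VM eM S F -> u \in F -> v \in F -> eG u v ->
  exists B, is_Sblock VG eG S B /\ [/\ u \in B, v \in B & eG u v].
Proof.
move=> [[sFV bF mF] [a [b [aS bS eab aF bF']]]] uF vF euv.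
have [sG iG eVG] := hG.
have uv : u != v by apply/eqP => E; move: euv; rewrite E iG.
have vG : v \in VG by have /andP[] := eVG _ _ euv.
have sUV : [set u; v] \subset VG by apply/subsetP => x; rewrite !inE => /orP[]/eqP->.
have [B0 [blk sB]] := block_exists (bic_edge sG euv) sUV.
have uB : u \in B0 by apply: (subsetP sB); rewrite !inE eqxx.
have vB : v \in B0 by apply: (subsetP sB); rewrite !inE eqxx orbT.
have [sB0 bB0 mB0] := blk.
suff [y [y' [yB y'B yS y'S eyy]]] :
    exists y y', [/\ y \in B0, y' \in B0, y \in S, y' \in S & eG y y'].
  by exists B0; split => //; split => //; exists y, y'.
have bG0 := (bicP _ _).1 bB0.
have bM : bic eM B0 by apply: (bic_sub _ bG0) => x y exy; rewrite heM exy.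
have bFM := (bicP _ _).1 bF.
have BF : B0 \subset F.
  have bU := bicU eM_sym bFM bM uv uF uB vF vB.
  have sU : F :|: B0 \subset VM.
    by rewrite subUset sFV /= hVM; apply: subset_trans sB0 (subsetUl _ _).
  have E := mF (F :|: B0) (subsetUl _ _) sU ((bicP _ _).2 bU).
  by rewrite -E subsetUr.
case: (boolP (F \subset B0)) => FB.
  exists a, b; split => //; try exact: (subsetP FB).
  by apply: eMG => //; apply: (subsetP hSG).
move/subsetPn: FB => [z zF zB].
have [_ cF rF] := bFM.
set M' := fun x y => eM x y && ~~((x \in B0) && (y \in B0)).
have [p [pB cp _]] := first_hit zB (cF z u zF uF) uB.
have cp' : connect M' z p.
  by apply: connect_sub cp => x y /andP[/and3P[e _ _] nb]; apply: connect1; rewrite /M' e nb.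
have [y0 [y0B y0F y0p]] : exists y0, [/\ y0 \in B0, y0 \in F & y0 != p].
  case: (u =P p) => [up|/eqP up]; [exists v | exists u]; split => //.
  by rewrite -up eq_sym.
have zp : z != p by apply/eqP => E; move: zB; rewrite E pB.
have zF' : z \in F :\ p by rewrite in_setD1 zp zF.
have y0F' : y0 \in F :\ p by rewrite in_setD1 y0p y0F.
have [q [qB cq [a' ea']]] := first_hit zB (rF p z y0 zF' y0F') y0B.
have pq : p != q by move: ea' => /and3P[_ _]; rewrite in_setD1 eq_sym => /andP[].
have cq' : connect M' z q.
  by apply: connect_sub cq => x y /andP[/and3P[e _ _] nb]; apply: connect1; rewrite /M' e nb.
have M'sym : symmetric M'.
  by move=> x y; rewrite /M' eM_sym; case: (x \in B0); case: (y \in B0).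
have cpq : connect M' p q.
  by apply: connect_trans cq'; rewrite (sym_connect_sym M'sym).
have inA : forall x, x \in B0 -> x \in A.
  move=> x xB; rewrite inE (subsetP sB0 _ xB) /=.
  have [_ c0 _] := bG0; exact: conn_in_subS sB0 (c0 _ _ uB xB).
move/connectP: cpq => [s ps qE].
have lA : last p s \in A by rewrite -qE inA.
have [H1 _] := rl ps lA.
have cR := H1 (inA _ pB); rewrite -qE in cR.
have sR : subrel (fun x y => eG x y && (((x \in S) && (y \in S)) || ~~((x \in B0) && (y \in B0)))) eG.
  by move=> x y /andP[].
have [y [y' [yB y'B _ /andP[eyy h]]]] := cvl hG blk sR pB qB pq cR.
exists y, y'; move: h; rewrite yB y'B orbF => /andP[yS y'S]; split => //.
Qed.

End Core.

Definition swt (T : finType) (a : nat * {set T}) : nat * {set T} :=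
  (if a.1 == 0 then 1 else if a.1 == 1 then 0 else a.1, a.2).

Lemma swtK (T : finType) : involutive (@swt T).
Proof. by move=> [n C]; rewrite /swt /=; case: n => [|[|n]]. Qed.

Lemma acyc_swap (T : finType) (VG VH S : {set T}) (eG eH : rel T) :
  {in S &, forall x y, eG x y = eH x y} ->
  aux_sum_acyclic VG eG VH eH S -> aux_sum_acyclic VH eH VG eG S.
Proof.
move=> hGS hac [c [sz uc adj]]; apply: hac.
have ceq : forall x y, conn_in eH S x y = conn_in eG S x y.
  move=> x y; apply: eq_connect => a b /=; case: (boolP (a \in S)) => aS;
    case: (boolP (b \in S)) => bS; rewrite ?andbF ?andbT ?hGS //.
have nodeS : forall a, aux_node VH eH VG eG S a -> aux_node VG eG VH eH S (swt a).
  move=> [n C]; rewrite /aux_node /swt /=.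
  case=> [[-> h]|[[-> h]|[-> [x xS E]]]]; [right; left | left | right; right]; split => //.
  by exists x => //; rewrite E; apply/setP => y; rewrite !inE ceq.
have adj0 : forall a b : nat * {set T}, aux_adj0 a b -> aux_adj0 (swt a) (swt b).
  move=> [n C] [m D]; rewrite /aux_adj0 /swt /=.
  by case: n => [|[|n]] //=; case: m => [|[|[|m]]].
exists (map (@swt T) c); split.
- by rewrite size_map.
- by rewrite map_inj_uniq //; apply: (can_inj (@swtK T)).
move=> i; rewrite size_map => hi.
rewrite !(nth_map (0, set0)) //; last by rewrite ltn_pmod //; case: (size c) hi.
have [h1 [h2 h3]] := adj i hi.
split; [exact: nodeS | split; [exact: nodeS|]].
by case: h3 => h; [left|right]; apply: adj0.
Qed.

Theorem lemma3p3 (T : finType) (d : nat)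
    (VG VH S : {set T}) (eG eH : rel T) (lG lH : T -> 'I_d)
    (hG : is_graph VG eG) (hH : is_graph VH eH)
    (hSG : S \subset VG) (hSH : S \subset VH)
    (hlG : block_labeling VG eG lG) (hlH : block_labeling VH eH lH)
    (hdisj : [disjoint VG :\: S & VH :\: S])
    (hGS : {in S &, forall x y, eG x y = eH x y})
    (hlab : {in S, forall x, lG x = lH x})
    (hacyc : aux_sum_acyclic VG eG VH eH S)
    (F : {set T}) (u v : T)
    (hF : is_Sblock (VG :|: VH) (fun x y => eG x y || eH x y) S F)
    (huF : u \in F) (hvF : v \in F) (huv : eG u v || eH u v) :
  (exists B, is_Sblock VG eG S B /\ [/\ u \in B, v \in B & eG u v]) \/
  (exists B, is_Sblock VH eH S B /\ [/\ u \in B, v \in B & eH u v]).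
Proof.
case/orP: huv => e.
  left; have [_ _ eV] := hG; have /andP[uG _] := eV _ _ e.
  exact: (core hG hH hSG hSH hdisj hGS hacyc (erefl _) (fun x y => erefl _) uG hF huF hvF e).
right; have [_ _ eV] := hH; have /andP[uH _] := eV _ _ e.
have hGS' : {in S &, forall x y, eH x y = eG x y} by move=> x y xS yS; rewrite hGS.
apply: (core hH hG hSH hSG _ hGS' (acyc_swap hGS hacyc) (setUC _ _) _ uH hF huF hvF e).
  by rewrite disjoint_sym.
by move=> x y; rewrite orbC.
Qed.
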